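(* Let $\{x_i,v_i\}_{i\in[N]}$ be the global solution of the delayed Cucker–Smale system described in the context, let $\beta>0$ and \[ G(t):=d_v(t)+\beta\int_{\max\{0,t-2\tau\}}^t e^{-(t-s)}\int_s^t\max_{i\in[N]}|\dot v_i(r)|\,\mathrm dr\,\mathrm ds,\qquad t\ge0. \] Let $K$ be the smallest integer such that $K\sigma\ge2\tau$. Then \[ G(t)\le\mathcal{Z}^K_\sigma\Delta^0_v\qquad\text{for all }t\in[0,2\tau], \] where $\mathcal{Z}^K_\sigma:=Z^K_\sigma+Z^{K-1}_\sigma\beta\big(1-(1+2\tau)e^{-2\tau}\big)$.
   Context: Let $N\ge2$, $d\ge1$ be integers, $[N]=\{1,\dots,N\}$, $0\le\sigma\le\tau$. Let $\psi:[0,\infty)\to[0,\infty)$ be continuous, nonincreasing, positive everywhere, with $\sup\psi\le1$. Given $x_i^0\in C^1([-\tau,0],\mathbb{R}^d)$, $v_i^0\in C([-\tau,0],\mathbb{R}^d)$ with $\frac{\mathrm d}{\mathrm dt}x_i^0=v_i^0$, $\{x_i,v_i\}$ is the global solution of $\dot x_i(t)=v_i(t)$, $\dot v_i(t)=\sum_{j\ne i}a_{ij}(t)(v_j(t-\tau)-v_i(t-\sigma))$ for $t>0$, with $a_{ij}(t)=\frac1{N-1}\psi(|x_i(t-\sigma)-x_j(t-\tau)|)$, and $x_i=x_i^0$, $v_i=v_i^0$ on $[-\tau,0]$ ($v_i$ continuously differentiable on $[0,\infty)$). $d_v(t):=\max_{i,j}|v_i(t)-v_j(t)|$; $\Delta^0_v:=\max_{i,j}\max_{s,t\in[-\tau,0]}|v_i^0(s)-v_j^0(t)|$.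 For $k\ge0$, \[ Z^k_\sigma:=\frac{1}{2\sqrt{\sigma(1+\sigma)}}\Big[\big((1+\sigma)+\sqrt{\sigma(1+\sigma)}\big)^{k+1}-\big((1+\sigma)-\sqrt{\sigma(1+\sigma)}\big)^{k+1}\Big], \] a polynomial in $\sigma$; equivalently $Z^0_\sigma=1$, $Z^k_\sigma=1+(1+\sigma)Z^{k-1}_\sigma+\sigma\sum_{m=0}^{k-1}Z^m_\sigma$ for $k\ge1$. *)

(* Defs.v *)
From Stdlib Require Import Reals Lra List.
From Coquelicot Require Import Coquelicot.
Open Scope R_scope.

(* Vectors of R^d are represented as functions nat -> R (components 0..d-1).
   Particle families are indexed by nat (particles 0..N-1). *)

Definition sumR (n : nat) (f : nat -> R) : R :=
  fold_right Rplus 0 (map f (seq 0 n)).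

(* finite max over k = 0..n-1 (of nonnegative quantities; 0 for n = 0) *)
Definition maxR (n : nat) (f : nat -> R) : R :=
  fold_right Rmax 0 (map f (seq 0 n)).

Definition vnorm (d : nat) (u : nat -> R) : R :=
  sqrt (sumR d (fun k => (u k) ^ 2)).

Definition vsub (u w : nat -> R) : nat -> R := fun k => u k - w k.

Definition d_v (N d : nat) (v : nat -> R -> nat -> R) (t : R) : R :=
  maxR N (fun i => maxR N (fun j => vnorm d (vsub (v i t) (v j t)))).

(* Delta^0_v = max_{i,j} max_{s,t in [-tau,0]} |v^0_i(s) - v^0_j(t)|
   (a maximum of a continuous function on a compact set, written as its sup) *)
Definition Delta0 (N d : nat) (tau : R) (v0 : nat -> R -> nat -> R) : R :=
  real (Lub_Rbar (fun z => exists i j s t,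
    (i < N)%nat /\ (j < N)%nat /\ -tau <= s <= 0 /\ -tau <= t <= 0 /\
    z = vnorm d (vsub (v0 i s) (v0 j t)))).

Definition Zsig (sigma : R) (k : nat) : R :=
  / (2 * sqrt (sigma * (1 + sigma))) *
  (((1 + sigma) + sqrt (sigma * (1 + sigma))) ^ (k + 1)
   - ((1 + sigma) - sqrt (sigma * (1 + sigma))) ^ (k + 1)).

Definition vdot (v : nat -> R -> nat -> R) (i : nat) (r : R) : nat -> R :=
  fun k => Derive (fun s => v i s k) r.

Definition Gfun (N d : nat) (tau beta : R) (v : nat -> R -> nat -> R) (t : R) : R :=
  d_v N d v t +
  beta * RInt (fun s => exp (-(t - s)) *
                 RInt (fun r => maxR N (fun i => vnorm d (vdot v i r))) s t)
              (Rmax 0 (t - 2 * tau)) t.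

Definition a_w (N d : nat) (sigma tau : R) (psi : R -> R)
  (x : nat -> R -> nat -> R) (i j : nat) (t : R) : R :=
  / INR (N - 1) * psi (vnorm d (vsub (x i (t - sigma)) (x j (t - tau)))).

Definition rhs (N d : nat) (sigma tau : R) (psi : R -> R)
  (x v : nat -> R -> nat -> R) (i : nat) (t : R) (k : nat) : R :=
  sumR N (fun j => if Nat.eqb j i then 0 else
    a_w N d sigma tau psi x i j t * (v j (t - tau) k - v i (t - sigma) k)).

(* Main.v *)
Require Import Defs.
From Stdlib Require Import Reals Lra Lia List.
From Coquelicot Require Import Coquelicot.
Open Scope R_scope.

Lemma sumR_0 f : sumR 0 f = 0.
Proof. reflexivity. Qed.

Lemma fold_app_plus (l1 l2 : list R) :
  fold_right Rplus 0 (l1 ++ l2) = fold_right Rplus 0 l1 + fold_right Rplus 0 l2.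
Proof. induction l1; simpl; [ring| rewrite IHl1; ring]. Qed.

Lemma fold_app_max (l1 l2 : list R) :
  fold_right Rmax 0 (l1 ++ l2) = fold_right Rmax (fold_right Rmax 0 l2) l1.
Proof. induction l1; simpl; [reflexivity| rewrite IHl1; reflexivity]. Qed.

Lemma sumR_S n f : sumR (S n) f = sumR n f + f n.
Proof.
  unfold sumR. rewrite seq_S, map_app, fold_app_plus. simpl. ring.
Qed.

Lemma maxR_S n f : maxR (S n) f = Rmax (maxR n f) (f n).
Proof.
  unfold maxR. rewrite seq_S, map_app, fold_app_max. simpl.
  generalize (f n). intro c.
  induction (seq 0 n) as [|a l IH]; simpl.
  - apply Rmax_comm.
  - rewrite IH. rewrite Rmax_assoc; reflexivity.
Qed.

Lemma sumR_ext n f g : (forall k, (k < n)%nat -> f k = g k) -> sumR n f = sumR n g.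
Proof.
  induction n; intros H; [reflexivity|].
  rewrite !sumR_S, IHn by (intros; apply H; lia). rewrite H by lia. reflexivity.
Qed.

Lemma sumR_le n f g : (forall k, (k < n)%nat -> f k <= g k) -> sumR n f <= sumR n g.
Proof.
  induction n; intros H; [unfold sumR, maxR; simpl; lra|].
  rewrite !sumR_S. assert (f n <= g n) by (apply H; lia).
  assert (sumR n f <= sumR n g) by (apply IHn; intros; apply H; lia). lra.
Qed.

Lemma sumR_plus n f g : sumR n (fun k => f k + g k) = sumR n f + sumR n g.
Proof. induction n; [unfold sumR, maxR; simpl; ring|]. rewrite !sumR_S, IHn. ring. Qed.

Lemma sumR_scal n c f : sumR n (fun k => c * f k) = c * sumR n f.
Proof. induction n; [unfold sumR, maxR; simpl; ring|]. rewrite !sumR_S, IHn. ring. Qed.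

Lemma sumR_nonneg n f : (forall k, (k < n)%nat -> 0 <= f k) -> 0 <= sumR n f.
Proof.
  intros H. apply Rle_trans with (sumR n (fun _ => 0)).
  - clear H. induction n; [unfold sumR, maxR; simpl; lra|]. rewrite sumR_S; lra.
  - apply sumR_le; auto.
Qed.

Lemma sumR_ge_term n f k : (forall j, (j < n)%nat -> 0 <= f j) -> (k < n)%nat -> f k <= sumR n f.
Proof.
  induction n; intros H Hk; [lia|]. rewrite sumR_S.
  assert (0 <= sumR n f) by (apply sumR_nonneg; intros; apply H; lia).
  destruct (Nat.eq_dec k n).
  - subst; lra.
  - assert (f k <= sumR n f) by (apply IHn; [intros; apply H|]; lia).
    assert (0 <= f n) by (apply H; lia). lra.
Qed.

Lemma maxR_nonneg n f : 0 <= maxR n f.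
Proof.
  induction n; [unfold sumR, maxR; simpl; lra|]. rewrite maxR_S.
  apply Rle_trans with (maxR n f); auto. apply Rmax_l.
Qed.

Lemma maxR_le n f B : 0 <= B -> (forall k, (k < n)%nat -> f k <= B) -> maxR n f <= B.
Proof.
  induction n; intros HB H; [unfold sumR, maxR; simpl; lra|]. rewrite maxR_S.
  apply Rmax_lub; [apply IHn; auto; intros; apply H; lia| apply H; lia].
Qed.

Lemma maxR_ge n f k : (k < n)%nat -> f k <= maxR n f.
Proof.
  induction n; intros Hk; [lia|]. rewrite maxR_S.
  destruct (Nat.eq_dec k n).
  - subst; apply Rmax_r.
  - apply Rle_trans with (maxR n f); [apply IHn; lia| apply Rmax_l].
Qed.

Lemma maxR_ext n f g : (forall k, (k < n)%nat -> f k = g k) -> maxR n f = maxR n g.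
Proof.
  induction n; intros H; [reflexivity|].
  rewrite !maxR_S, IHn by (intros; apply H; lia). rewrite H by lia. reflexivity.
Qed.

Lemma sumR_count n i c : (i < n)%nat ->
  sumR n (fun j => if Nat.eqb j i then 0 else c) = INR (n - 1) * c.
Proof.
  assert (Hgen : forall m, (m <= i)%nat -> sumR m (fun j => if Nat.eqb j i then 0 else c) = INR m * c).
  { induction m; intros Hm; [unfold sumR, maxR; simpl; ring|]. rewrite sumR_S, IHm by lia.
    replace (Nat.eqb m i) with false by (symmetry; apply Nat.eqb_neq; lia).
    rewrite S_INR. ring. }
  induction n; intros Hi; [lia|].
  rewrite sumR_S. destruct (Nat.eq_dec i n).
  - subst. rewrite Hgen by lia. rewrite Nat.eqb_refl. replace (S n - 1)%nat with n by lia. ring.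
  - rewrite IHn by lia. replace (Nat.eqb n i) with false by (symmetry; apply Nat.eqb_neq; lia).
    replace (S n - 1)%nat with (S (n - 1)) by lia. rewrite S_INR. ring.
Qed.

Definition dot (d : nat) (u w : nat -> R) := sumR d (fun k => u k * w k).

Lemma sumsq_nonneg d u : 0 <= sumR d (fun k => u k ^ 2).
Proof. apply sumR_nonneg; intros; apply pow2_ge_0. Qed.

Lemma vnorm_nonneg d u : 0 <= vnorm d u.
Proof. apply sqrt_pos. Qed.

Lemma vnorm_sq d u : vnorm d u ^ 2 = dot d u u.
Proof.
  unfold vnorm, dot. rewrite pow2_sqrt by apply sumsq_nonneg.
  apply sumR_ext; intros; ring.
Qed.

Lemma vnorm_ext d u w : (forall k, (k < d)%nat -> u k = w k) -> vnorm d u = vnorm d w.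
Proof. intros H. unfold vnorm. f_equal. apply sumR_ext. intros; rewrite H; auto. Qed.

Lemma dot_zero d u w : vnorm d u = 0 -> dot d u w = 0.
Proof.
  intros H. assert (Hs : sumR d (fun k => u k ^ 2) = 0).
  { unfold vnorm in H. rewrite <- (pow2_sqrt (sumR d (fun k => u k ^ 2))) by apply sumsq_nonneg.
    rewrite H; ring. }
  unfold dot. rewrite <- (sumR_0 (fun _ => 0)). 
  transitivity (sumR d (fun _ => 0)).
  - apply sumR_ext. intros k Hk.
    assert (u k ^ 2 <= 0).
    { rewrite <- Hs. apply (sumR_ge_term d (fun k => u k ^ 2)); auto. intros; apply pow2_ge_0. }
    assert (u k = 0) by nra. rewrite H1; ring.
  - clear. induction d; [reflexivity|]. rewrite sumR_S, IHd. simpl; ring.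
Qed.

Lemma dot_expand d u w l :
  sumR d (fun k => (l * u k - w k) ^ 2) = l ^ 2 * dot d u u - 2 * l * dot d u w + dot d w w.
Proof.
  unfold dot. transitivity (sumR d (fun k => (l^2 * (u k * u k) + (-(2*l)) * (u k * w k)) + w k * w k)).
  - apply sumR_ext. intros; ring.
  - rewrite !sumR_plus, !sumR_scal. ring.
Qed.

Lemma dot_sym d u w : dot d u w = dot d w u.
Proof. unfold dot. apply sumR_ext; intros; ring. Qed.

Lemma cauchy_schwarz d u w : dot d u w <= vnorm d u * vnorm d w.
Proof.
  destruct (Req_dec (vnorm d u) 0) as [H0|H0].
  - rewrite dot_zero by auto. rewrite H0. lra.
  - pose proof (vnorm_nonneg d u). pose proof (vnorm_nonneg d w).
    assert (HA : 0 < dot d u u) by (rewrite <- vnorm_sq; apply pow_lt; lra).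
    set (D := dot d u w) in *.
    pose proof (sumsq_nonneg d (fun k => D / dot d u u * u k - w k)) as Hq.
    cbv beta in Hq. rewrite (dot_expand d u w (D / dot d u u)) in Hq. fold D in Hq.
    rewrite <- !vnorm_sq in Hq. rewrite <- vnorm_sq in HA.
    assert (HD : D ^ 2 <= (vnorm d u * vnorm d w) ^ 2).
    { set (A := vnorm d u ^ 2) in *. set (C := vnorm d w ^ 2) in *.
      assert (Hq' : 0 <= C - D ^ 2 / A).
      { replace (C - D ^ 2 / A) with ((D / A) ^ 2 * A - 2 * (D / A) * D + C) by (field; lra). lra. }
      replace ((vnorm d u * vnorm d w) ^ 2) with (A * C) by (unfold A, C; ring).
      assert (0 <= A * (C - D^2/A)) by (apply Rmult_le_pos; lra).
      replace (A * (C - D^2/A)) with (A*C - D^2) in H2 by (field; lra). lra. }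
    assert (0 <= vnorm d u * vnorm d w) by (apply Rmult_le_pos; auto).
    nra.
Qed.

Lemma vnorm_triangle d u w z : (forall k, (k < d)%nat -> z k = u k + w k) ->
  vnorm d z <= vnorm d u + vnorm d w.
Proof.
  intros H. pose proof (vnorm_nonneg d u). pose proof (vnorm_nonneg d w). pose proof (vnorm_nonneg d z).
  assert (vnorm d z ^ 2 <= (vnorm d u + vnorm d w) ^ 2).
  { rewrite vnorm_sq. replace (dot d z z) with (dot d u u + 2 * dot d u w + dot d w w).
    - rewrite <- !vnorm_sq. pose proof (cauchy_schwarz d u w). nra.
    - unfold dot. rewrite <- sumR_scal, <- !sumR_plus. apply sumR_ext; intros; rewrite H by auto; ring. }
  nra.
Qed.

Lemma vnorm_scal d c u z : (forall k, (k < d)%nat -> z k = c * u k) ->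
  vnorm d z = Rabs c * vnorm d u.
Proof.
  intros H. unfold vnorm. rewrite <- sqrt_Rsqr_abs, <- sqrt_mult_alt by apply Rle_0_sqr.
  f_equal. rewrite <- sumR_scal. apply sumR_ext; intros; rewrite H by auto. unfold Rsqr; ring.
Qed.

Lemma vnorm_zero d z : (forall k, (k < d)%nat -> z k = 0) -> vnorm d z = 0.
Proof.
  intros H. rewrite (vnorm_scal d 0 z z) by (intros; rewrite H; auto; ring). rewrite Rabs_R0; ring.
Qed.

Lemma vnorm_sumR d n (g : nat -> nat -> R) z :
  (forall k, (k < d)%nat -> z k = sumR n (fun j => g j k)) ->
  vnorm d z <= sumR n (fun j => vnorm d (g j)).
Proof.
  revert z. induction n; intros z H.
  - rewrite vnorm_zero by (intros; rewrite H; auto). unfold sumR; simpl; lra.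
  - rewrite sumR_S.
    apply Rle_trans with (vnorm d (fun k => sumR n (fun j => g j k)) + vnorm d (g n)).
    + apply vnorm_triangle. intros; rewrite H by auto; rewrite sumR_S; reflexivity.
    + pose proof (IHn (fun k => sumR n (fun j => g j k)) (fun k _ => eq_refl)). lra.
Qed.

Lemma vsub_triangle d a b c :
  vnorm d (vsub a c) <= vnorm d (vsub a b) + vnorm d (vsub b c).
Proof. apply vnorm_triangle; intros; unfold vsub; ring. Qed.
Section Zs.
Variable sigma : R.
Hypothesis Hs : 0 < sigma.

Let s := sqrt (sigma * (1 + sigma)).
Let a := (1 + sigma) + s.
Let b := (1 + sigma) - s.

Lemma s_pos : 0 < s.
Proof. unfold s. apply sqrt_lt_R0. nra. Qed.

Lemma s_sq : s * s = sigma * (1 + sigma).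
Proof. unfold s. apply sqrt_sqrt. nra. Qed.

Lemma Zsig_eq k : Zsig sigma k = / (2 * s) * (a ^ (k + 1) - b ^ (k + 1)).
Proof. reflexivity. Qed.

Lemma Zsig_0 : Zsig sigma 0 = 1.
Proof. rewrite Zsig_eq. simpl. pose proof s_pos. unfold a, b. field. lra. Qed.

Lemma Zsig_1 : Zsig sigma 1 = 2 + 2 * sigma.
Proof. rewrite Zsig_eq. simpl. pose proof s_pos. unfold a, b. field. lra. Qed.

Lemma Zsig_rec k : Zsig sigma (S (S k)) = 2 * (1 + sigma) * Zsig sigma (S k) - (1 + sigma) * Zsig sigma k.
Proof.
  rewrite !Zsig_eq. pose proof s_pos. pose proof s_sq.
  replace (S (S k) + 1)%nat with (S (S (k + 1))) by lia.
  replace (S k + 1)%nat with (S (k + 1)) by lia.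
  simpl. set (A := a ^ (k + 1)). set (B := b ^ (k + 1)).
  assert (Hab : a * b = 1 + sigma) by (unfold a, b; nra).
  assert (Hapb : a + b = 2 * (1 + sigma)) by (unfold a, b; ring).
  rewrite <- Hapb. rewrite <- Hab.
  field. lra.
Qed.

Lemma Zsig_ge k : 0 <= Zsig sigma k /\ (1 + 2 * sigma) * Zsig sigma k <= Zsig sigma (S k).
Proof.
  induction k.
  - rewrite Zsig_0, Zsig_1. lra.
  - destruct IHk as [H1 H2]. split; [nra|].
    rewrite Zsig_rec. nra.
Qed.

Lemma Zsig_pow k : (1 + 2 * sigma) ^ k <= Zsig sigma k.
Proof.
  induction k.
  - rewrite Zsig_0; simpl; lra.
  - simpl. destruct (Zsig_ge k). nra.
Qed.
End Zs.

Lemma cont_plus (f g : R -> R) x : continuous f x -> continuous g x -> continuous (fun y => f y + g y) x.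
Proof. intros; exact (continuous_plus f g x H H0). Qed.
Lemma cont_mult (f g : R -> R) x : continuous f x -> continuous g x -> continuous (fun y => f y * g y) x.
Proof. intros; exact (continuous_mult f g x H H0). Qed.
Lemma cont_minus (f g : R -> R) x : continuous f x -> continuous g x -> continuous (fun y => f y - g y) x.
Proof. intros; exact (continuous_minus f g x H H0). Qed.
Lemma cont_const (c : R) x : continuous (fun _ : R => c) x.
Proof. apply continuous_const. Qed.
Lemma cont_id x : continuous (fun y : R => y) x.
Proof. apply continuous_id. Qed.
Lemma cont_pow2 (f : R -> R) x : continuous f x -> continuous (fun y => f y ^ 2) x.
Proof.
  intros H. apply (continuous_ext (fun y => f y * (f y * 1))). intros; simpl; ring.
  apply cont_mult; auto. apply cont_mult; auto. apply cont_const.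
Qed.
Lemma cont_sqrt (f : R -> R) x : 0 <= f x -> continuous f x -> continuous (fun y => sqrt (f y)) x.
Proof.
  intros H0 H. apply (continuous_comp f sqrt); auto.
  apply continuity_pt_filterlim. apply continuity_pt_sqrt; auto.
Qed.
Lemma Rmax_formula a b : Rmax a b = (a + b + Rabs (a - b)) / 2.
Proof. unfold Rmax; destruct (Rle_dec a b); [rewrite Rabs_left1 by lra| rewrite Rabs_right by lra]; field. Qed.
Lemma Rmin_formula a b : Rmin a b = (a + b - Rabs (a - b)) / 2.
Proof. unfold Rmin; destruct (Rle_dec a b); [rewrite Rabs_left1 by lra| rewrite Rabs_right by lra]; field. Qed.
Lemma cont_Rmax (f g : R -> R) x : continuous f x -> continuous g x -> continuous (fun y => Rmax (f y) (g y)) x.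
Proof.
  intros. apply (continuous_ext (fun y => (f y + g y + Rabs (f y - g y)) * /2)).
  intros; rewrite Rmax_formula; reflexivity.
  apply cont_mult; [|apply cont_const]. apply cont_plus; [apply cont_plus; auto|].
  apply continuous_Rabs_comp. apply cont_minus; auto.
Qed.
Lemma cont_Rmin (f g : R -> R) x : continuous f x -> continuous g x -> continuous (fun y => Rmin (f y) (g y)) x.
Proof.
  intros. apply (continuous_ext (fun y => (f y + g y - Rabs (f y - g y)) * /2)).
  intros; rewrite Rmin_formula; reflexivity.
  apply cont_mult; [|apply cont_const]. apply cont_minus; [apply cont_plus; auto|].
  apply continuous_Rabs_comp. apply cont_minus; auto.
Qed.
Lemma cont_sumR n (f : nat -> R -> R) x : (forall j, (j < n)%nat -> continuous (f j) x) ->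
  continuous (fun y => sumR n (fun j => f j y)) x.
Proof.
  induction n; intros H.
  - apply (continuous_ext (fun _ => 0)). intros; reflexivity. apply cont_const.
  - apply (continuous_ext (fun y => sumR n (fun j => f j y) + f n y)). intros; rewrite sumR_S; reflexivity.
    apply cont_plus; [apply IHn; intros; apply H; lia| apply H; lia].
Qed.
Lemma cont_maxR n (f : nat -> R -> R) x : (forall j, (j < n)%nat -> continuous (f j) x) ->
  continuous (fun y => maxR n (fun j => f j y)) x.
Proof.
  induction n; intros H.
  - apply (continuous_ext (fun _ => 0)). intros; reflexivity. apply cont_const.
  - apply (continuous_ext (fun y => Rmax (maxR n (fun j => f j y)) (f n y))). intros; rewrite maxR_S; reflexivity.
    apply cont_Rmax; [apply IHn; intros; apply H; lia| apply H; lia].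
Qed.
Lemma cont_vnorm d (u : R -> nat -> R) x : (forall k, (k < d)%nat -> continuous (fun y => u y k) x) ->
  continuous (fun y => vnorm d (u y)) x.
Proof.
  intros H. unfold vnorm. apply cont_sqrt. apply sumsq_nonneg.
  apply (cont_sumR d (fun k y => u y k ^ 2)). intros; apply cont_pow2; auto.
Qed.

Lemma cont_comp_within (h f : R -> R) (D : R -> Prop) x :
  (forall y, D (h y)) -> continuous h x ->
  filterlim f (within D (locally (h x))) (locally (f (h x))) ->
  continuous (fun y => f (h y)) x.
Proof.
  intros HD Hh Hf. unfold continuous. eapply filterlim_comp; [|exact Hf].
  intros P HP. unfold within in HP. specialize (Hh _ HP). unfold filtermap in *.
  eapply filter_imp; [|exact Hh]. simpl. intros y Hy. apply Hy, HD.
Qed.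

Definition clamp (tau p : R) := Rmax (- tau) (Rmin p 0).

Lemma clamp_in tau p : 0 <= tau -> - tau <= clamp tau p <= 0.
Proof. intros. unfold clamp. split; [apply Rmax_l|]. apply Rmax_lub; [lra| apply Rmin_r]. Qed.

Lemma clamp_id tau p : - tau <= p <= 0 -> clamp tau p = p.
Proof. intros. unfold clamp. rewrite Rmin_left by lra. rewrite Rmax_right by lra. reflexivity. Qed.

Lemma cont_clamp tau x : continuous (clamp tau) x.
Proof. unfold clamp. apply (cont_Rmax (fun _ => - tau) (fun p => Rmin p 0)). apply cont_const.
  apply (cont_Rmin (fun p => p) (fun _ => 0)); [apply cont_id| apply cont_const]. Qed.

Lemma Delta0_prop N d tau (v0 : nat -> R -> nat -> R) :
  0 < tau -> (1 <= N)%nat ->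
  (forall i k, (i < N)%nat -> (k < d)%nat -> forall t, -tau <= t <= 0 ->
     filterlim (fun s => v0 i s k) (within (fun s => -tau <= s <= 0) (locally t)) (locally (v0 i t k))) ->
  0 <= Delta0 N d tau v0 /\
  (forall i j s u, (i < N)%nat -> (j < N)%nat -> -tau <= s <= 0 -> -tau <= u <= 0 ->
     vnorm d (vsub (v0 i s) (v0 j u)) <= Delta0 N d tau v0).
Proof.
  intros Htau HN Hc.
  set (g := fun p => sumR N (fun i => sumR d (fun k => v0 i (clamp tau p) k ^ 2))).
  destruct (continuity_ab_maj g (-tau) 0) as [Mx [HMx _]]; [lra| |].
  { intros c Hcc. apply continuity_pt_filterlim. unfold g.
    apply (cont_sumR N (fun i y => sumR d (fun k => v0 i (clamp tau y) k ^ 2))). intros i Hi.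
    apply (cont_sumR d (fun k y => v0 i (clamp tau y) k ^ 2)). intros k Hk.
    apply cont_pow2. apply (cont_comp_within (clamp tau) (fun s => v0 i s k) (fun s => -tau <= s <= 0)).
    intros; apply clamp_in; lra. apply cont_clamp. apply Hc; auto. apply clamp_in; lra. }
  set (B := g Mx).
  assert (Hb : forall i s, (i < N)%nat -> -tau <= s <= 0 -> vnorm d (v0 i s) <= sqrt B).
  { intros i s Hi Hs. unfold vnorm. apply sqrt_le_1_alt.
    apply Rle_trans with (g s); [|apply HMx; auto].
    unfold g. rewrite clamp_id by auto.
    apply (sumR_ge_term N (fun i => sumR d (fun k => v0 i s k ^ 2))); auto.
    intros; apply sumsq_nonneg. }
  set (E := fun z => exists i j s t, (i < N)%nat /\ (j < N)%nat /\ -tau <= s <= 0 /\ -tau <= t <= 0 /\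
    z = vnorm d (vsub (v0 i s) (v0 j t))).
  assert (HE : forall z, E z -> z <= 2 * sqrt B).
  { intros z (i & j & s & t & Hi & Hj & Hs & Ht & ->).
    apply Rle_trans with (vnorm d (v0 i s) + vnorm d (fun k => - v0 j t k)).
    apply vnorm_triangle. intros; unfold vsub; cbv beta; unfold Rminus; reflexivity.
    rewrite (vnorm_scal d (-1) (v0 j t) (fun k => - v0 j t k)) by (intros; cbv beta; lra).
    replace (Rabs (-1)) with 1 by (rewrite Rabs_left by lra; lra). pose proof (Hb i s Hi Hs). pose proof (Hb j t Hj Ht). lra. }
  assert (HE0 : E (vnorm d (vsub (v0 0%nat 0) (v0 0%nat 0)))).
  { exists 0%nat, 0%nat, 0, 0. repeat split; try lra; try lia. }
  destruct (Lub_Rbar_correct E) as [Hub Hlub].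
  assert (Hfin : forall z, E z -> z <= Delta0 N d tau v0).
  { unfold Delta0. fold E. intros z Hz.
    specialize (Hub z Hz). specialize (Hlub (2 * sqrt B)).
    assert (Rbar_le (Lub_Rbar E) (2 * sqrt B)).
    { apply Hlub. intros y Hy. simpl. apply HE; auto. }
    destruct (Lub_Rbar E); simpl in *; tauto. }
  split.
  - apply Rle_trans with (vnorm d (vsub (v0 0%nat 0) (v0 0%nat 0))); [apply vnorm_nonneg|]. apply Hfin; auto.
  - intros i j s u Hi Hj Hs Hu. apply Hfin. exists i, j, s, u. repeat split; auto; lra.
Qed.

Lemma within_cont_gen (f f0 : R -> R) tau p :
  (forall t, -tau <= t <= 0 -> f t = f0 t) ->
  (forall t, -tau <= t <= 0 -> filterlim f0 (within (fun s => -tau <= s <= 0) (locally t)) (locally (f0 t))) ->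
  (forall t, 0 <= t -> continuous f t) -> -tau <= p ->
  filterlim f (within (fun q => -tau <= q) (locally p)) (locally (f p)).
Proof.
  intros Heq H0 Hc Hp. destruct (Rle_dec 0 p) as [Hp0|Hp0].
  - intros P HP. specialize (Hc p Hp0 P HP). unfold filtermap, within in *.
    eapply filter_imp; [|exact Hc]. simpl. auto.
  - rewrite Heq by lra. intros P HP. specialize (H0 p (conj Hp (Rlt_le _ _ (Rnot_le_lt _ _ Hp0))) P HP).
    unfold filtermap, within in *.
    assert (Hl : locally p (fun q => q < 0)) by (apply open_lt; lra).
    generalize (filter_and _ _ H0 Hl). apply filter_imp. simpl.
    intros q [Hq1 Hq2] Hq3. rewrite Heq by lra. apply Hq1. lra.
Qed.

Lemma cont_clamped (f f0 : R -> R) tau c p :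
  (forall t, -tau <= t <= 0 -> f t = f0 t) ->
  (forall t, -tau <= t <= 0 -> filterlim f0 (within (fun s => -tau <= s <= 0) (locally t)) (locally (f0 t))) ->
  (forall t, 0 <= t -> continuous f t) ->
  continuous (fun r => f (Rmax (-tau) (r - c))) p.
Proof.
  intros Heq H0 Hc.
  apply (continuous_comp (fun r => r - c) (fun q => f (Rmax (-tau) q))).
  apply cont_minus; [apply cont_id| apply cont_const].
  apply (cont_comp_within (Rmax (-tau)) f (fun q => -tau <= q)).
  intros; apply Rmax_l.
  apply (cont_Rmax (fun _ => -tau) (fun q => q)); [apply cont_const| apply cont_id].
  apply within_cont_gen with f0; auto. apply Rmax_l.
Qed.

Lemma integral_bound (F Ft : R -> R) t M : 0 <= t ->
  (forall p, continuous Ft p) -> (forall r, 0 < r -> F r = Ft r) ->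
  (forall r, 0 < r < t -> Ft r <= M) ->
  RInt (fun s => exp (-(t - s)) * RInt F s t) 0 t <= M * (1 - (1 + t) * exp (- t)).
Proof.
  intros Ht HFc HFe HM.
  assert (HexFt : forall a b, ex_RInt Ft a b) by (intros; apply (@ex_RInt_continuous R_CompleteNormedModule); auto).
  assert (HexF : forall s, 0 <= s <= t -> ex_RInt F s t).
  { intros s Hs. apply (ex_RInt_ext Ft). intros y Hy. rewrite Rmin_left in Hy by lra.
    rewrite HFe by lra. reflexivity. auto. }
  assert (HH : forall s, 0 <= s <= t -> RInt F s t = RInt Ft s t).
  { intros s Hs. apply RInt_ext. intros y Hy. rewrite Rmin_left in Hy by lra. apply HFe; lra. }
  assert (HIc : forall s, continuous (fun z => RInt Ft z t) s).
  { intros s. apply (continuous_RInt_2 Ft s t). apply filter_forall. intros z. apply (@RInt_correct R_CompleteNormedModule). auto. }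
  assert (HOc : forall s, continuous (fun s => exp (-(t - s)) * RInt Ft s t) s).
  { intros s. apply cont_mult; auto. apply continuous_exp_comp.
    apply (continuous_opp (fun s => t - s)). apply cont_minus; [apply cont_const| apply cont_id]. }
  assert (HexO : ex_RInt (fun s => exp (-(t - s)) * RInt F s t) 0 t).
  { apply (ex_RInt_ext (fun s => exp (-(t - s)) * RInt Ft s t)).
    intros y Hy. rewrite Rmin_left in Hy by lra. rewrite Rmax_right in Hy by lra. rewrite HH by lra. reflexivity.
    apply (@ex_RInt_continuous R_CompleteNormedModule). intros; apply HOc. }
  set (Bf := fun s => exp (-(t - s)) * (M * (t - s))).
  assert (HBc : forall s, continuous Bf s).
  { intros s. unfold Bf. apply cont_mult. apply continuous_exp_comp.
    apply (continuous_opp (fun s => t - s)). apply cont_minus; [apply cont_const| apply cont_id].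
    apply cont_mult; [apply cont_const|]. apply cont_minus; [apply cont_const| apply cont_id]. }
  apply Rle_trans with (RInt Bf 0 t).
  - apply RInt_le; auto. apply (@ex_RInt_continuous R_CompleteNormedModule); intros; apply HBc.
    intros s Hs. unfold Bf. apply Rmult_le_compat_l; [left; apply exp_pos|].
    apply Rle_trans with (RInt (fun _ => M) s t).
    + apply RInt_le; try lra. apply HexF; lra. apply ex_RInt_const.
      intros r Hr. rewrite HFe by lra. apply HM; lra.
    + rewrite RInt_const. unfold scal; simpl; unfold mult; simpl. lra.
  - right. apply (@is_RInt_unique R_CompleteNormedModule).
    set (Phi := fun s => M * (1 + t - s) * exp (-(t - s))).
    replace (M * (1 - (1 + t) * exp (- t))) with (minus (Phi t) (Phi 0)).
    + apply (@is_RInt_derive R_CompleteNormedModule Phi Bf).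
      * intros s _. unfold Bf, Phi. auto_derive; auto. unfold Rminus; ring.
      * intros; apply HBc.
    + unfold minus, plus, opp, Phi; simpl. replace (t - t) with 0 by ring. rewrite Ropp_0, exp_0.
      replace (t - 0) with t by ring. ring.
Qed.

Lemma vsub_sym d a b : vnorm d (vsub a b) = vnorm d (vsub b a).
Proof.
  rewrite (vnorm_scal d (-1) (vsub b a) (vsub a b)) by (intros; unfold vsub; lra).
  replace (Rabs (-1)) with 1 by (rewrite Rabs_left by lra; lra). ring.
Qed.

Lemma vsub_self d a : vnorm d (vsub a a) = 0.
Proof. apply vnorm_zero. intros; unfold vsub; ring. Qed.

Lemma is_derive_sumR n (f : nat -> R -> R) (df : nat -> R) r :
  (forall k, (k < n)%nat -> is_derive (f k) r (df k)) ->
  is_derive (fun y => sumR n (fun k => f k y)) r (sumR n df).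
Proof.
  induction n; intros H.
  - apply (is_derive_ext (fun _ => 0)). intros; reflexivity.
    unfold sumR; simpl. apply (is_derive_const 0 r).
  - apply (is_derive_ext (fun y => sumR n (fun k => f k y) + f n y)). intros; rewrite sumR_S; reflexivity.
    rewrite sumR_S. apply (is_derive_plus (fun y => sumR n (fun k => f k y)) (f n)).
    apply IHn; intros; apply H; lia. apply H; lia.
Qed.

Section System.
Variables (N d : nat) (sigma tau : R) (psi : R -> R) (x0 v0 x v : nat -> R -> nat -> R).
Hypothesis HN : (2 <= N)%nat.
Hypothesis Hs : 0 < sigma.
Hypothesis Hst : sigma <= tau.
Hypothesis Hpsi_cont : forall r, 0 <= r ->
     filterlim psi (within (fun s => 0 <= s) (locally r)) (locally (psi r)).
Hypothesis Hpsi : forall r, 0 <= r -> 0 < psi r /\ psi r <= 1.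
Hypothesis Hinit : forall i k, (i < N)%nat -> (k < d)%nat ->
     forall t, -tau <= t <= 0 ->
       filterlim (fun s => v0 i s k) (within (fun s => -tau <= s <= 0) (locally t))
                 (locally (v0 i t k)) /\
       filterlim (fun s => x0 i s k) (within (fun s => -tau <= s <= 0) (locally t))
                 (locally (x0 i t k)).
Hypothesis Hagree : forall i t, (i < N)%nat -> -tau <= t <= 0 -> x i t = x0 i t /\ v i t = v0 i t.
Hypothesis Hcont : forall i k, (i < N)%nat -> (k < d)%nat -> forall t, 0 <= t ->
     continuous (fun s => x i s k) t /\ continuous (fun s => v i s k) t.
Hypothesis Hsys : forall i k, (i < N)%nat -> (k < d)%nat -> forall t, 0 < t ->
     is_derive (fun s => x i s k) t (v i t k) /\
     is_derive (fun s => v i s k) t (rhs N d sigma tau psi x v i t k).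

Let Delta := Delta0 N d tau v0.

Lemma Delta_facts : 0 <= Delta /\
  (forall i j s u, (i < N)%nat -> (j < N)%nat -> -tau <= s <= 0 -> -tau <= u <= 0 ->
     vnorm d (vsub (v i s) (v j u)) <= Delta).
Proof.
  destruct (Delta0_prop N d tau v0) as [H1 H2]; [lra| lia| intros; apply Hinit; auto|].
  split; auto. intros i j s u Hi Hj Hs' Hu.
  rewrite (proj2 (Hagree i s Hi Hs')), (proj2 (Hagree j u Hj Hu)). apply H2; auto.
Qed.

Lemma rhs_bound T P : 0 <= P ->
  (forall i j s u, (i < N)%nat -> (j < N)%nat -> -tau <= s <= T -> -tau <= u <= T ->
     vnorm d (vsub (v i s) (v j u)) <= P) ->
  forall i r, (i < N)%nat -> 0 <= r <= T + sigma ->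
    vnorm d (fun k => rhs N d sigma tau psi x v i r k) <= P.
Proof.
  intros HP HB i r Hi Hr.
  set (g := fun j k => if Nat.eqb j i then 0 else
      a_w N d sigma tau psi x i j r * (v j (r - tau) k - v i (r - sigma) k)).
  eapply Rle_trans.
  { apply (vnorm_sumR d N g). intros k Hk. reflexivity. }
  assert (HN1 : 0 < INR (N - 1)) by (apply lt_0_INR; lia).
  eapply Rle_trans.
  { apply (sumR_le N _ (fun j => if Nat.eqb j i then 0 else / INR (N - 1) * P)).
    intros j Hj. unfold g. destruct (Nat.eqb j i).
    - rewrite vnorm_zero by auto. lra.
    - rewrite (vnorm_scal d (a_w N d sigma tau psi x i j r) (vsub (v j (r - tau)) (v i (r - sigma)))) by
        (intros; unfold vsub; reflexivity).
      unfold a_w. set (q := vnorm d (vsub (x i (r - sigma)) (x j (r - tau)))).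
      destruct (Hpsi q (vnorm_nonneg _ _)) as [Hp1 Hp2].
      assert (0 < / INR (N - 1)) by (apply Rinv_0_lt_compat; auto).
      rewrite Rabs_right by (apply Rle_ge, Rmult_le_pos; lra).
      assert (vnorm d (vsub (v j (r - tau)) (v i (r - sigma))) <= P) by (apply HB; auto; lra).
      pose proof (vnorm_nonneg d (vsub (v j (r - tau)) (v i (r - sigma)))).
      apply Rle_trans with (/ INR (N - 1) * vnorm d (vsub (v j (r - tau)) (v i (r - sigma)))).
      + rewrite Rmult_assoc. apply Rmult_le_compat_l; [lra|]. nra.
      + apply Rmult_le_compat_l; lra. }
  rewrite sumR_count by auto. right. field. lra.
Qed.

Lemma mvt_vec i a b M : (i < N)%nat -> 0 <= a <= b ->
  (forall r, a <= r <= b -> vnorm d (fun k => rhs N d sigma tau psi x v i r k) <= M) ->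
  vnorm d (vsub (v i b) (v i a)) <= (b - a) * M.
Proof.
  intros Hi Hab HM.
  assert (HM0 : 0 <= M) by (eapply Rle_trans; [apply vnorm_nonneg| apply (HM a); lra]).
  set (w := vsub (v i b) (v i a)).
  set (phi := fun y => sumR d (fun k => w k * v i y k)).
  destruct (MVT_gen phi a b (fun y => sumR d (fun k => w k * rhs N d sigma tau psi x v i y k))) as [c [Hc Heq]].
  - intros y Hy. rewrite Rmin_left in Hy by lra. rewrite Rmax_right in Hy by lra.
    apply (is_derive_sumR d (fun k y => w k * v i y k)). intros k Hk.
    apply is_derive_scal. apply Hsys; auto; lra.
  - intros y Hy. rewrite Rmin_left in Hy by lra. rewrite Rmax_right in Hy by lra.
    apply continuity_pt_filterlim. apply (cont_sumR d (fun k y => w k * v i y k)).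
    intros k Hk. apply cont_mult. apply cont_const. apply Hcont; auto; lra.
  - rewrite Rmin_left in Hc by lra. rewrite Rmax_right in Hc by lra.
    assert (Hww : phi b - phi a = vnorm d w ^ 2).
    { rewrite vnorm_sq. unfold dot.
      replace (phi b - phi a) with (sumR d (fun k => w k * v i b k) + -1 * sumR d (fun k => w k * v i a k)) by (unfold phi; ring).
      rewrite <- (sumR_scal d (-1)), <- sumR_plus.
      apply sumR_ext. intros k Hk. change (w k * v i b k + -1 * (w k * v i a k) = w k * (v i b k - v i a k)). ring. }
    rewrite Hww in Heq.
    pose proof (cauchy_schwarz d w (fun k => rhs N d sigma tau psi x v i c k)) as Hcs.
    unfold dot in Hcs.
    pose proof (HM c Hc). pose proof (vnorm_nonneg d w).
    assert (Hle : vnorm d w ^ 2 <= vnorm d w * ((b - a) * M)).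
    { rewrite Heq. assert (0 <= b - a) by lra.
      apply Rle_trans with (vnorm d w * vnorm d (fun k => rhs N d sigma tau psi x v i c k) * (b - a)).
      apply Rmult_le_compat_r; auto.
      replace (vnorm d w * ((b - a) * M)) with (vnorm d w * M * (b - a)) by ring.
      apply Rmult_le_compat_r; auto. apply Rmult_le_compat_l; auto. }
    destruct (Req_dec (vnorm d w) 0) as [Hw0|Hw0].
    + rewrite Hw0. apply Rmult_le_pos; lra.
    + assert (0 < vnorm d w) by lra. 
      apply Rmult_le_reg_l with (vnorm d w); auto. simpl in Hle. lra.
Qed.

Lemma main_induction k : forall i j s u, (i < N)%nat -> (j < N)%nat ->
  -tau <= s <= INR k * sigma -> -tau <= u <= INR k * sigma ->
  vnorm d (vsub (v i s) (v j u)) <= (1 + 2 * sigma) ^ k * Delta.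
Proof.
  destruct Delta_facts as [HD0 HD].
  induction k; intros i j s u Hi Hj Hs' Hu.
  - simpl in *. rewrite Rmult_1_l. apply HD; auto; lra.
  - set (T := INR k * sigma).
    assert (HT : 0 <= T) by (unfold T; apply Rmult_le_pos; [apply pos_INR| lra]).
    set (P := (1 + 2 * sigma) ^ k * Delta).
    assert (HP : 0 <= P) by (unfold P; apply Rmult_le_pos; auto; apply pow_le; lra).
    assert (Hs2 : -tau <= s <= T + sigma) by (rewrite S_INR in Hs'; unfold T; nra).
    assert (Hu2 : -tau <= u <= T + sigma) by (rewrite S_INR in Hu; unfold T; nra).
    clear Hs' Hu. rename Hs2 into Hs'. rename Hu2 into Hu.
    assert (Hrb : forall l r, (l < N)%nat -> 0 <= r <= T + sigma ->
              vnorm d (fun k => rhs N d sigma tau psi x v l r k) <= P).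
    { intros l r Hl Hr. apply (rhs_bound T P HP); auto. }
    assert (Hstep : forall l y, (l < N)%nat -> -tau <= y <= T + sigma ->
              vnorm d (vsub (v l y) (v l (Rmin y T))) <= sigma * P).
    { intros l y Hl Hy. destruct (Rle_dec y T).
      - rewrite Rmin_left by auto. rewrite vsub_self. apply Rmult_le_pos; lra.
      - rewrite Rmin_right by lra.
        apply Rle_trans with ((y - T) * P).
        + apply mvt_vec; auto; try lra. intros r Hr. apply Hrb; auto; lra.
        + apply Rmult_le_compat_r; lra. }
    assert (Hmid : vnorm d (vsub (v i (Rmin s T)) (v j (Rmin u T))) <= P).
    { apply IHk; auto. split; [apply Rmin_glb; lra| apply Rmin_r]. split; [apply Rmin_glb; lra| apply Rmin_r]. }
    pose proof (Hstep i s Hi Hs'). pose proof (Hstep j u Hj Hu).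
    rewrite vsub_sym in H0.
    pose proof (vsub_triangle d (v i s) (v i (Rmin s T)) (v j u)).
    pose proof (vsub_triangle d (v i (Rmin s T)) (v j (Rmin u T)) (v j u)).
    simpl. replace ((1 + 2 * sigma) * (1 + 2 * sigma) ^ k * Delta) with (P + sigma * P + sigma * P) by (unfold P; ring). lra.
Qed.

Definition xt := fun i p => x i (Rmax (-tau) p).
Definition vt := fun i p => v i (Rmax (-tau) p).

Lemma xt_cont i k c p : (i < N)%nat -> (k < d)%nat -> continuous (fun r => xt i (r - c) k) p.
Proof.
  intros Hi Hk. unfold xt.
  apply (cont_clamped (fun s => x i s k) (fun s => x0 i s k)).
  - intros t Ht. rewrite (proj1 (Hagree i t Hi Ht)). reflexivity.
  - intros t Ht. apply (proj2 (Hinit i k Hi Hk t Ht)).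
  - intros t Ht. apply (proj1 (Hcont i k Hi Hk t Ht)).
Qed.

Lemma vt_cont i k c p : (i < N)%nat -> (k < d)%nat -> continuous (fun r => vt i (r - c) k) p.
Proof.
  intros Hi Hk. unfold vt.
  apply (cont_clamped (fun s => v i s k) (fun s => v0 i s k)).
  - intros t Ht. rewrite (proj2 (Hagree i t Hi Ht)). reflexivity.
  - intros t Ht. apply (proj1 (Hinit i k Hi Hk t Ht)).
  - intros t Ht. apply (proj2 (Hcont i k Hi Hk t Ht)).
Qed.

Definition Ft (r : R) := maxR N (fun i => vnorm d (fun k => rhs N d sigma tau psi xt vt i r k)).

Lemma Ft_cont p : continuous Ft p.
Proof.
  unfold Ft. apply (cont_maxR N (fun i r => vnorm d (fun k => rhs N d sigma tau psi xt vt i r k))).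
  intros i Hi. apply (cont_vnorm d (fun r k => rhs N d sigma tau psi xt vt i r k)). intros k Hk.
  unfold rhs.
  apply (cont_sumR N (fun j r => if Nat.eqb j i then 0 else
      a_w N d sigma tau psi xt i j r * (vt j (r - tau) k - vt i (r - sigma) k))).
  intros j Hj. destruct (Nat.eqb j i); [apply cont_const|].
  apply cont_mult.
  - unfold a_w. apply cont_mult; [apply cont_const|].
    apply (cont_comp_within (fun r => vnorm d (vsub (xt i (r - sigma)) (xt j (r - tau)))) psi (fun s => 0 <= s)).
    + intros; apply vnorm_nonneg.
    + apply (cont_vnorm d (fun r => vsub (xt i (r - sigma)) (xt j (r - tau)))). intros k' Hk'.
      unfold vsub. apply (cont_minus (fun r => xt i (r - sigma) k') (fun r => xt j (r - tau) k')); apply xt_cont; auto.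
    + apply Hpsi_cont, vnorm_nonneg.
  - apply (cont_minus (fun r => vt j (r - tau) k) (fun r => vt i (r - sigma) k)); apply vt_cont; auto.
Qed.

Lemma rhs_t_eq i r k : 0 <= r -> rhs N d sigma tau psi xt vt i r k = rhs N d sigma tau psi x v i r k.
Proof.
  intros Hr. unfold rhs, a_w, xt, vt.
  rewrite (Rmax_right (-tau) (r - sigma)), (Rmax_right (-tau) (r - tau)) by lra. reflexivity.
Qed.

Lemma F_eq r : 0 < r -> maxR N (fun i => vnorm d (vdot v i r)) = Ft r.
Proof.
  intros Hr. unfold Ft. apply maxR_ext; intros i Hi. apply vnorm_ext; intros k Hk.
  unfold vdot. rewrite rhs_t_eq by lra. apply is_derive_unique. apply (proj2 (Hsys i k Hi Hk r Hr)).
Qed.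

Lemma Ft_bound k r : 0 <= r <= INR (S k) * sigma -> Ft r <= (1 + 2 * sigma) ^ k * Delta.
Proof.
  intros Hr. destruct Delta_facts as [HD0 _].
  assert (HP : 0 <= (1 + 2 * sigma) ^ k * Delta) by (apply Rmult_le_pos; auto; apply pow_le; lra).
  unfold Ft. apply maxR_le; auto. intros i Hi.
  rewrite (vnorm_ext d _ (fun k => rhs N d sigma tau psi x v i r k)) by (intros; apply rhs_t_eq; lra).
  apply (rhs_bound (INR k * sigma)); auto.
  - intros; apply main_induction; auto.
  - rewrite S_INR in Hr. lra.
Qed.

Lemma final_bound beta K t : 0 < beta -> 2 * tau <= INR K * sigma -> INR (K - 1) * sigma < 2 * tau ->
  0 <= t <= 2 * tau ->
  Gfun N d tau beta v t <=
    (Zsig sigma K + Zsig sigma (K - 1) * beta * (1 - (1 + 2 * tau) * exp (- (2 * tau)))) * Delta.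
Proof.
  intros Hb HK1 HK2 Ht.
  destruct Delta_facts as [HD0 _].
  destruct K as [|K].
  { simpl in HK1. lra. }
  replace (S K - 1)%nat with K in * by lia.
  unfold Gfun. rewrite Rmax_left by lra.
  set (M := (1 + 2 * sigma) ^ K * Delta).
  assert (HI : RInt (fun s => exp (-(t - s)) * RInt (fun r => maxR N (fun i => vnorm d (vdot v i r))) s t) 0 t
               <= M * (1 - (1 + t) * exp (- t))).
  { apply (integral_bound _ Ft); try lra.
    - apply Ft_cont.
    - apply F_eq.
    - intros r Hr. apply Ft_bound. split; lra. }
  assert (Hdv : d_v N d v t <= (1 + 2 * sigma) ^ (S K) * Delta).
  { unfold d_v. assert (0 <= (1 + 2 * sigma) ^ (S K) * Delta) by (apply Rmult_le_pos; auto; apply pow_le; lra).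
    apply maxR_le; auto. intros i Hi. apply maxR_le; auto. intros j Hj.
    apply main_induction; auto; lra. }
  assert (He : 0 <= 1 - (1 + t) * exp (- t) <= 1 - (1 + 2 * tau) * exp (- (2 * tau))).
  { pose proof (exp_ineq1_le (- t)). pose proof (exp_ineq1_le (t - 2 * tau)).
    pose proof (exp_pos (- t)). pose proof (exp_pos (- (2 * tau))).
    assert (exp (- t) * exp t = 1) by (rewrite <- exp_plus; replace (- t + t) with 0 by ring; apply exp_0).
    pose proof (exp_ineq1_le t).
    split.
    - nra.
    - assert (Hx : exp (- t) = exp (- (2 * tau)) * exp (2 * tau - t)) by (rewrite <- exp_plus; f_equal; ring).
      pose proof (exp_ineq1_le (2 * tau - t)).
      rewrite Hx. assert ((1 + t) * exp (2 * tau - t) >= 1 + 2 * tau) by nra. nra. }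
  pose proof (Zsig_pow sigma Hs (S K)). pose proof (Zsig_pow sigma Hs K).
  assert (HM : M <= Zsig sigma K * Delta) by (unfold M; apply Rmult_le_compat_r; auto).
  assert (HM0 : 0 <= M) by (unfold M; apply Rmult_le_pos; auto; apply pow_le; lra).
  assert (beta * RInt (fun s => exp (-(t - s)) * RInt (fun r => maxR N (fun i => vnorm d (vdot v i r))) s t) 0 t
          <= beta * (Zsig sigma K * Delta * (1 - (1 + 2 * tau) * exp (- (2 * tau))))).
  { apply Rmult_le_compat_l; [lra|]. eapply Rle_trans; [exact HI|].
    apply Rle_trans with (M * (1 - (1 + 2 * tau) * exp (- (2 * tau)))).
    apply Rmult_le_compat_l; lra. apply Rmult_le_compat_r; lra. }
  assert ((1 + 2 * sigma) ^ S K * Delta <= Zsig sigma (S K) * Delta) by (apply Rmult_le_compat_r; auto).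
  nra.
Qed.
End System.
Theorem lemma4p2
  (N d : nat) (sigma tau beta : R) (psi : R -> R)
  (x0 v0 x v : nat -> R -> nat -> R) (K : nat) :
  (2 <= N)%nat -> (1 <= d)%nat ->
  0 < sigma -> sigma <= tau ->
  (* psi: continuous, nonincreasing, positive, sup psi <= 1 on [0,oo) *)
  (forall r, 0 <= r ->
     filterlim psi (within (fun s => 0 <= s) (locally r)) (locally (psi r))) ->
  (forall r1 r2, 0 <= r1 -> r1 <= r2 -> psi r2 <= psi r1) ->
  (forall r, 0 <= r -> 0 < psi r /\ psi r <= 1) ->
  (* initial data: x0_i in C^1([-tau,0]), v0_i in C([-tau,0]), x0_i' = v0_i *)
  (forall i k, (i < N)%nat -> (k < d)%nat ->
     forall t, -tau <= t <= 0 ->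
       filterlim (fun s => v0 i s k) (within (fun s => -tau <= s <= 0) (locally t))
                 (locally (v0 i t k)) /\
       filterlim (fun s => x0 i s k) (within (fun s => -tau <= s <= 0) (locally t))
                 (locally (x0 i t k))) ->
  (forall i k, (i < N)%nat -> (k < d)%nat ->
     forall t, -tau < t < 0 -> is_derive (fun s => x0 i s k) t (v0 i t k)) ->
  (* the solution agrees with the initial data on [-tau,0] *)
  (forall i t, (i < N)%nat -> -tau <= t <= 0 -> x i t = x0 i t /\ v i t = v0 i t) ->
  (* continuity of the solution at t >= 0 *)
  (forall i k, (i < N)%nat -> (k < d)%nat -> forall t, 0 <= t ->
     continuous (fun s => x i s k) t /\ continuous (fun s => v i s k) t) ->
  (* the delayed Cucker-Smale system for t > 0 *)
  (forall i k, (i < N)%nat -> (k < d)%nat -> forall t, 0 < t ->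
     is_derive (fun s => x i s k) t (v i t k) /\
     is_derive (fun s => v i s k) t (rhs N d sigma tau psi x v i t k)) ->
  0 < beta ->
  (* K = smallest integer with K sigma >= 2 tau *)
  2 * tau <= INR K * sigma -> INR (K - 1) * sigma < 2 * tau ->
  forall t, 0 <= t <= 2 * tau ->
    Gfun N d tau beta v t <=
    (Zsig sigma K + Zsig sigma (K - 1) * beta * (1 - (1 + 2 * tau) * exp (- (2 * tau))))
    * Delta0 N d tau v0.

Proof.
  intros HN Hd Hs Hst Hpc Hmono Hpsi Hinit Hx0 Hagree Hcont Hsys Hb HK1 HK2 t Ht.
  eapply (final_bound N d sigma tau psi x0 v0 x v); eauto.
Qed.
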